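(* Let $R_1,R_2\in\mathbb R^{r\times n}$ and let $\mathcal R=\ker([R_1\ \ -R_2])\subseteq\mathbb R^n\times\mathbb R^n$ (so $(x,x')\in\mathcal R\iff R_1x=R_2x'$) be a total relation. Then $\mathcal R$ is an equivalence relation on $\mathbb R^n$ if and only if $R_1=R_2$.
   Context: A relation $\mathcal R\subseteq\mathbb R^n\times\mathbb R^n$ is total if every $x\in\mathbb R^n$ appears as a first component of some pair in $\mathcal R$ and every $x'\in\mathbb R^n$ appears as a second component of some pair in $\mathcal R$. *)

(* Defs.v *)
From HB Require Import structures.
From mathcomp Require Import all_boot all_order all_algebra.
From mathcomp Require Import reals.
Set Implicit Arguments. Unset Strict Implicit. Unset Printing Implicit Defensive.
Import Order.TTheory GRing.Theory Num.Theory.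
Local Open Scope ring_scope.

Definition kerrel (R : realType) (r n : nat) (R1 R2 : 'M[R]_(r, n))
  (x x' : 'cV[R]_n) : Prop :=
  row_mx R1 (- R2) *m col_mx x x' = 0.

Definition total_relation (T : Type) (Rl : T -> T -> Prop) : Prop :=
  (forall x, exists x', Rl x x') /\ (forall x', exists x, Rl x x').

Definition equivalence_relation (T : Type) (Rl : T -> T -> Prop) : Prop :=
  [/\ (forall x, Rl x x),
      (forall x y, Rl x y -> Rl y x) &
      (forall x y z, Rl x y -> Rl y z -> Rl x z)].

(* Main.v *)
Require Import Defs.
From HB Require Import structures.
From mathcomp Require Import all_boot all_order all_algebra.
From mathcomp Require Import reals.
Import GRing.Theory.
Local Open Scope ring_scope.

Lemma kerrelE (R : realType) (r n : nat) (R1 R2 : 'M[R]_(r, n)) x x' :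
  kerrel R1 R2 x x' <-> R1 *m x = R2 *m x'.
Proof.
rewrite /kerrel mul_row_col mulNmx; split.
  by move/eqP; rewrite subr_eq0 => /eqP.
by move=> ->; rewrite subrr.
Qed.

Theorem proposition5 (R : realType) (r n : nat) (R1 R2 : 'M[R]_(r, n)) :
  total_relation (kerrel R1 R2) ->
  (equivalence_relation (kerrel R1 R2) <-> R1 = R2).
Proof.
move=> _; split.
  case=> refl _ _; apply/matrixP => i j.
  have /kerrelE := refl (delta_mx j 0).
  rewrite -!colE => /matrixP /(_ i 0).
  by rewrite !mxE.
move=> <-; split.
- by move=> x; apply/kerrelE.
- by move=> x y /kerrelE H; apply/kerrelE.
- by move=> x y z /kerrelE H1 /kerrelE H2; apply/kerrelE; rewrite H1.
Qed.
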